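(* There exist instances of the multi-agent contract model (described in the context) with subadditive reward functions and $n$ agents whose price of equality is $\Omega(\sqrt{n})$.
   Context: Model: principal and agents $A=[n]$; each agent $i$ has a finite action set $T_i$ (pairwise disjoint), $T=\bigsqcup_iT_i$, costs $c_j\ge0$, $c(S_i)=\sum_{j\in S_i}c_j$. Reward $f:2^T\to[0,1]$ monotone, $f(\emptyset)=0$; $f$ is subadditive if $f(S)+f(S')\ge f(S\cup S')$. Contract $\boldsymbol{\alpha}\in[0,1]^A$; agent $i$'s utility $\alpha_if(S)-c(S\cap T_i)$; $S\in\mathsf{NE}(\boldsymbol{\alpha})$ (pure Nash equilibrium) if no agent can gain by changing her own subset of actions. Principal's utility $(1-\sum_i\alpha_i)f(S)$. A contract is equal-pay if all its nonzero entries are equal. The price of equality of an instance is $\dfrac{\max_{\boldsymbol{\alpha},\,S\in\mathsf{NE}(\boldsymbol{\alpha})}(1-\sum_i\alpha_i)f(S)}{\max_{\boldsymbol{\alpha}\text{ equal-pay},\,S\in\mathsf{NE}(\boldsymbol{\alpha})}(1-\sum_i\alpha_i)f(S)}$. *)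

(* Defs.v *)
From mathcomp Require Import all_boot all_order all_algebra.
From mathcomp Require Export reals.
Set Implicit Arguments. Unset Strict Implicit. Unset Printing Implicit Defensive.
Import Order.TTheory GRing.Theory Num.Theory.
Local Open Scope ring_scope.

(* Agents are 'I_n; the action set T is a finite
   type and [own j] is the agent owning action j, so T_i = {j | own j = i}
   (pairwise disjoint, T = disjoint union of the T_i). *)
Section Model.
Variables (R : realFieldType) (n : nat) (T : finType).
Variables (own : T -> 'I_n) (c : T -> R) (f : {set T} -> R).

Definition costs_nonneg := forall j, 0 <= c j.

Definition cost (S : {set T}) : R := \sum_(j in S) c j.

Definition agent_part (i : 'I_n) (S : {set T}) : {set T} :=
  [set j in S | own j == i].

Definition reward_fun :=
  [/\ f set0 = 0,
      (forall S, 0 <= f S <= 1) &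
      (forall S S' : {set T}, S \subset S' -> f S <= f S')].

Definition subadditive :=
  forall S S' : {set T}, f (S :|: S') <= f S + f S'.

Definition is_contract (a : 'I_n -> R) := forall i, 0 <= a i <= 1.

Definition equal_pay (a : 'I_n -> R) :=
  forall i k, a i != 0 -> a k != 0 -> a i = a k.

Definition agent_utility (a : 'I_n -> R) (i : 'I_n) (S : {set T}) : R :=
  a i * f S - cost (agent_part i S).

Definition is_NE (a : 'I_n -> R) (S : {set T}) :=
  forall (i : 'I_n) (S' : {set T}),
    (forall j, own j != i -> (j \in S') = (j \in S)) ->
    agent_utility a i S' <= agent_utility a i S.

Definition principal_utility (a : 'I_n -> R) (S : {set T}) : R :=
  (1 - \sum_(i < n) a i) * f S.

End Model.

(* Main.v *)
Require Import Defs.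
From mathcomp Require Import all_boot all_order all_algebra.
From mathcomp Require Import reals.
From mathcomp Require Import ring lra.
Import Order.TTheory GRing.Theory Num.Theory.
Local Open Scope ring_scope.

Definition KK (R : realType) (m : nat) : R := Num.sqrt (m%:R).
Definition ll (R : realType) (m : nat) : R := (m%:R + 2)^-1.
Definition mu (R : realType) (m : nat) : R := ll R m * KK R m / m%:R.
Definition cnt {m : nat} (S : {set 'I_m.+1}) : nat := #|S :\ ord0|.
Definition ff (R : realType) (m : nat) (S : {set 'I_m.+1}) : R :=
  (if S == set0 then 0 else ll R m + mu R m * (cnt S)%:R)
  + (if S == setT then ll R m else 0).
Definition cc (R : realType) m (j : 'I_m.+1) : R :=
  if j == ord0 then ll R m / 4 else (ll R m + mu R m) / (2 * m%:R).
Definition aa (R : realType) m (j : 'I_m.+1) : R :=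
  if j == ord0 then 1 / 4 else 1 / (2 * m%:R).

Lemma params (R : realType) (m : nat) : (1 <= m)%N ->
  [/\ 0 < KK R m, KK R m * KK R m = m%:R, 0 < ll R m,
      ll R m * (m%:R + 2) = 1 &
      [/\ mu R m * m%:R = ll R m * KK R m, 0 < mu R m, 1 <= m%:R :> R &
          KK R m <= m%:R]].
Proof.
move=> m1.
have m1R : 1 <= m%:R :> R by rewrite ler1n.
have K2 : KK R m * KK R m = m%:R.
  by rewrite /KK -expr2 sqr_sqrtr // ler0n.
have K0 : 0 <= KK R m by exact: sqrtr_ge0.
have Kp : 0 < KK R m by nra.
have lp : 0 < ll R m by rewrite /ll invr_gt0; lra.
have l1 : ll R m * (m%:R + 2) = 1 by rewrite /ll mulVf //; lra.
have mum : mu R m * m%:R = ll R m * KK R m.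
  by rewrite /mu divfK //; lra.
split => //; split => //.
- by rewrite /mu; apply: divr_gt0; [exact: mulr_gt0|lra].
- nra.
Qed.

Lemma cnt_le m (S : {set 'I_m.+1}) : (cnt S <= m)%N.
Proof.
have := cardsD1 ord0 [set: 'I_m.+1]; rewrite cardsT card_ord in_setT /= add1n.
case=> E; rewrite [X in (_ <= X)%N]E; apply: subset_leq_card; apply: setSD; exact: subsetT.
Qed.

Lemma cnt_T m : cnt [set: 'I_m.+1] = m.
Proof.
by have := cardsD1 ord0 [set: 'I_m.+1]; rewrite cardsT card_ord in_setT /= add1n; case.
Qed.

Lemma cnt_U m (A B : {set 'I_m.+1}) : (cnt (A :|: B) <= cnt A + cnt B)%N.
Proof. by rewrite /cnt setDUl leq_card_setU. Qed.

Lemma cnt_S m (A B : {set 'I_m.+1}) : A \subset B -> (cnt A <= cnt B)%N.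
Proof. by move=> h; apply: subset_leq_card; apply: setSD. Qed.

Lemma cnt_D m (S : {set 'I_m.+1}) y : y != ord0 -> y \in S ->
  cnt S = (cnt (S :\ y)).+1.
Proof.
move=> y0 yS; rewrite /cnt (cardsD1 y (S :\ ord0)) !inE y0 yS /= add1n.
by rewrite !setDDl setUC.
Qed.

Lemma cost_part (R : realType) m (c : 'I_m.+1 -> R) i S :
  cost c (agent_part (fun j => j) i S) = if i \in S then c i else 0.
Proof.
rewrite /cost /agent_part; case: ifP => Hi.
  by rewrite (big_pred1 i) // => j; rewrite !inE; case: eqP => [->|]; rewrite ?Hi ?andbF.
by rewrite big_pred0 // => j; rewrite !inE; case: eqP => [->|]; rewrite ?Hi ?andbF.
Qed.

Lemma NE_drop (R : realType) m (c : 'I_m.+1 -> R) f b S i :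
  is_NE (fun j => j) c f b S -> i \in S -> c i <= b i * (f S - f (S :\ i)).
Proof.
move=> NE Hi.
have H : forall j, j != i -> (j \in S :\ i) = (j \in S) by move=> j H'; rewrite !inE H'.
have := NE i (S :\ i) H.
rewrite /agent_utility !cost_part Hi setD11 /= mulrBr; lra.
Qed.
Arguments NE_drop {R m c f b S i}.
Arguments cnt_D {m S y}.

Lemma set0T m : (set0 == [set: 'I_m.+1]) = false.
Proof. by apply/negbTE/eqP => /setP /(_ ord0); rewrite !inE. Qed.

Lemma ff0 (R : realType) m : ff R m set0 = 0.
Proof. by rewrite /ff eqxx set0T addr0. Qed.

Lemma ffT (R : realType) m : ff R m setT = ll R m + mu R m * m%:R + ll R m.
Proof. by rewrite /ff eqxx eq_sym set0T cnt_T. Qed.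

Lemma ffmid (R : realType) m S : S != set0 -> S != setT ->
  ff R m S = ll R m + mu R m * (cnt S)%:R.
Proof. by rewrite /ff => /negbTE -> /negbTE ->; rewrite addr0. Qed.

Lemma ff_ge0 (R : realType) m S : (1 <= m)%N -> 0 <= ff R m S.
Proof.
move=> m1; case: (params R m m1) => K0 K2 l0 l1 [mum mu0 m1R Km].
have : 0 <= mu R m * (cnt S)%:R by apply: mulr_ge0; [lra|rewrite ler0n].
rewrite /ff; case: ifP => _; case: ifP => _; lra.
Qed.

Lemma ff_le (R : realType) m S : (1 <= m)%N ->
  ff R m S <= ll R m + mu R m * (cnt S)%:R + ll R m.
Proof.
move=> m1; case: (params R m m1) => K0 K2 l0 l1 [mum mu0 m1R Km].
have : 0 <= mu R m * (cnt S)%:R by apply: mulr_ge0; [lra|rewrite ler0n].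
rewrite /ff; case: ifP => _; case: ifP => _; lra.
Qed.

Lemma ff_le1 (R : realType) m S : (1 <= m)%N -> ff R m S <= 1.
Proof.
move=> m1; case: (params R m m1) => K0 K2 l0 l1 [mum mu0 m1R Km].
have h1 := ff_le R m S m1.
have h2 : mu R m * (cnt S)%:R <= mu R m * m%:R.
  by apply: ler_wpM2l; [lra|rewrite ler_nat cnt_le].
nra.
Qed.

Lemma ff_mono (R : realType) m (S S' : {set 'I_m.+1}) : (1 <= m)%N ->
  S \subset S' -> ff R m S <= ff R m S'.
Proof.
move=> m1 sub; case: (params R m m1) => K0 K2 l0 l1 [mum mu0 m1R Km].
have hc : mu R m * (cnt S)%:R <= mu R m * (cnt S')%:R.
  by apply: ler_wpM2l; [lra|rewrite ler_nat cnt_S].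
have hc0 : 0 <= mu R m * (cnt S)%:R by apply: mulr_ge0; [lra|rewrite ler0n].
case: (S =P set0) => [->|/eqP S0]; first by rewrite ff0; exact: ff_ge0.
rewrite /ff.
have S'0 : (S' == set0) = false.
  apply/negbTE; apply: contraNN S0 => /eqP E; rewrite E subset0 in sub; exact: sub.
rewrite (negbTE S0) S'0.
case: (S =P setT) => [E|/eqP ST].
  have -> : S' = setT by apply/eqP; rewrite eqEsubset subsetT -E.
  by rewrite E eqxx; lra.
case: ifP => _; lra.
Qed.

Lemma ff_subadd (R : realType) m (A B : {set 'I_m.+1}) : (1 <= m)%N ->
  ff R m (A :|: B) <= ff R m A + ff R m B.
Proof.
move=> m1; case: (params R m m1) => K0 K2 l0 l1 [mum mu0 m1R Km].
case: (A =P set0) => [->|/eqP A0]; first by rewrite set0U ff0 add0r.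
case: (B =P set0) => [->|/eqP B0]; first by rewrite setU0 ff0 addr0.
have hU := ff_le R m (A :|: B) m1.
have hc : mu R m * (cnt (A :|: B))%:R <= mu R m * (cnt A)%:R + mu R m * (cnt B)%:R.
  by rewrite -mulrDr -natrD; apply: ler_wpM2l; [lra|rewrite ler_nat cnt_U].
have hA : ll R m + mu R m * (cnt A)%:R <= ff R m A.
  have : 0 <= mu R m * (cnt A)%:R by apply: mulr_ge0; [lra|rewrite ler0n].
  by rewrite /ff (negbTE A0); case: ifP => _; lra.
have hB : ll R m + mu R m * (cnt B)%:R <= ff R m B.
  have : 0 <= mu R m * (cnt B)%:R by apply: mulr_ge0; [lra|rewrite ler0n].
  by rewrite /ff (negbTE B0); case: ifP => _; lra.
lra.
Qed.

Lemma cnt_TD0 m : cnt ([set: 'I_m.+1] :\ ord0) = m.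
Proof. by rewrite /cnt setDDl setUid; exact: cnt_T. Qed.

Lemma TD_ne0 m (i : 'I_m.+1) : (1 <= m)%N -> [set: 'I_m.+1] :\ i != set0.
Proof.
move=> m1; apply/set0Pn.
case: (i =P ord0) => [->|/eqP i0].
  exists ord_max; rewrite !inE andbT; apply/eqP => /(congr1 val) /=.
  by move=> E; rewrite E in m1.
by exists ord0; rewrite !inE andbT eq_sym.
Qed.

Lemma TD_neT m (i : 'I_m.+1) : [set: 'I_m.+1] :\ i != setT.
Proof. by apply/eqP => /setP /(_ i); rewrite !inE eqxx. Qed.

Lemma ffTD0 (R : realType) m : (1 <= m)%N ->
  ff R m ([set: 'I_m.+1] :\ ord0) = ll R m + mu R m * m%:R.
Proof. by move=> m1; rewrite ffmid ?TD_ne0 ?TD_neT // cnt_TD0. Qed.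

Lemma ffTDy (R : realType) m (i : 'I_m.+1) : (1 <= m)%N -> i != ord0 ->
  exists k, m = k.+1 /\ ff R m ([set: 'I_m.+1] :\ i) = ll R m + mu R m * k%:R.
Proof.
move=> m1 i0; exists (cnt ([set: 'I_m.+1] :\ i)); split.
  by rewrite -(cnt_D i0 (in_setT i)) cnt_T.
by rewrite ffmid ?TD_ne0 ?TD_neT.
Qed.

Lemma sum_aa (R : realType) m : (1 <= m)%N -> \sum_(i < m.+1) aa R m i = 3 / 4.
Proof.
move=> m1; case: (params R m m1) => K0 K2 l0 l1 [mum mu0 m1R Km].
rewrite big_ord_recl.
rewrite (eq_bigr (fun _ => 1 / (2 * m%:R))); last first.
  by move=> i _; rewrite /aa eq_sym (negbTE (neq_lift _ _)).
rewrite sumr_const card_ord -mulr_natr /aa eqxx.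
field; lra.
Qed.

Lemma aa_contract (R : realType) m : (1 <= m)%N -> is_contract (aa R m).
Proof.
move=> m1 i; case: (params R m m1) => K0 K2 l0 l1 [mum mu0 m1R Km].
rewrite /aa; case: ifP => _; apply/andP; split; try lra.
  by rewrite mul1r invr_ge0; lra.
by rewrite mul1r invf_le1; lra.
Qed.

Lemma aa_NE (R : realType) m : (1 <= m)%N ->
  is_NE (fun j => j) (cc R m) (ff R m) (aa R m) setT.
Proof.
move=> m1 i S' HS; case: (params R m m1) => K0 K2 l0 l1 [mum mu0 m1R Km].
rewrite /agent_utility !cost_part in_setT.
case: (boolP (i \in S')) => iS.
  have -> : S' = setT.
    by apply/setP => j; rewrite in_setT; case: (j =P i) => [->//|/eqP ji]; rewrite HS ?in_setT.
  lra.
have -> : S' = setT :\ i.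
  apply/setP => j; rewrite !inE andbT; case: (j =P i) => [->|/eqP ji] /=.
    exact: negbTE.
  by rewrite HS ?in_setT.
rewrite ffT subr0.
case: (i =P ord0) => [->|/eqP i0].
  rewrite ffTD0 // /aa /cc eqxx.
  by rewrite le_eqVlt; apply/orP; left; apply/eqP; field.
have [k [mk ->]] := ffTDy R m i m1 i0.
rewrite /aa /cc (negbTE i0).
have mR : (m%:R : R) = k%:R + 1 by rewrite mk natr1.
have k0 : 0 <= k%:R :> R by rewrite ler0n.
rewrite mR le_eqVlt; apply/orP; left; apply/eqP; field; lra.
Qed.

Lemma cc_gt0 (R : realType) m i : (1 <= m)%N -> 0 < cc R m i.
Proof.
move=> m1; case: (params R m m1) => K0 K2 l0 l1 [mum mu0 m1R Km].
rewrite /cc; case: ifP => _; first lra.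
by apply: divr_gt0; lra.
Qed.

Lemma sum_ge_sub (R : realType) m (b : 'I_m.+1 -> R) (A : {set 'I_m.+1}) :
  (forall i, 0 <= b i) -> \sum_(i in A) b i <= \sum_i b i.
Proof.
move=> b0; rewrite [X in _ <= X](bigID (fun i => i \in A)) /=.
rewrite lerDl; apply: sumr_ge0 => i _; exact: b0.
Qed.

Lemma eq_bound (R : realType) m (b : 'I_m.+1 -> R) S : (3 <= m)%N ->
  is_contract b -> equal_pay b -> is_NE (fun j => j) (cc R m) (ff R m) b S ->
  principal_utility (ff R m) b S <= 3 * ll R m.
Proof.
move=> m3 bc be NE.
have m1 : (1 <= m)%N := leq_trans (isT : (1 <= 3)%N) m3.
case: (params R m m1) => K0 K2 l0 l1 [mum mu0 m1R Km].
have b0 : forall i, 0 <= b i by move=> i; case/andP: (bc i).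
have sb0 : 0 <= \sum_i b i by apply: sumr_ge0 => i _.
have f0 := ff_ge0 R m S m1.
have muK : mu R m * KK R m = ll R m.
  by apply: (mulIf (_ : m%:R != 0)); [rewrite pnatr_eq0 -lt0n|nra].
have mul : mu R m <= ll R m by nra.
rewrite /principal_utility.
case: (S =P set0) => [->|/eqP S0]; first by rewrite ff0 mulr0; lra.
case: (S =P setT) => [ST|/eqP ST].
  have bnz : forall i, b i != 0.
    move=> i; have hi : i \in S by rewrite ST in_setT.
    have := NE_drop NE hi.
    have := cc_gt0 R m i m1.
    by case: (b i =P 0) => [->|//]; rewrite mul0r; lra.
  have h0i : ord0 \in S by rewrite ST in_setT.
  have h0 := NE_drop NE h0i; rewrite ST ffT ffTD0 // /cc eqxx in h0.
  have b04 : 1 / 4 <= b ord0.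
    have : ll R m / 4 <= b ord0 * ll R m by move: h0; congr (_ <= _ * _); ring.
    nra.
  have -> : \sum_i b i = \sum_(i < m.+1) b ord0.
    by apply: eq_bigr => i _; apply: be; exact: bnz.
  rewrite sumr_const card_ord -mulr_natr.
  have : 1 <= b ord0 * (m.+1)%:R.
    have : (4 : R) <= (m.+1)%:R by rewrite ler_nat ltnS.
    nra.
  nra.
rewrite ffmid //.
have sB : (ll R m + mu R m * (cnt S)%:R) * \sum_i b i >= 0.
  by apply: mulr_ge0 => //; apply: addr_ge0; [lra|apply: mulr_ge0; [lra|rewrite ler0n]].
case: (leqP (cnt S) 1) => hs.
  have : (cnt S)%:R <= 1 :> R by rewrite (_ : 1 = 1%:R) // ler_nat.
  have : 0 <= (cnt S)%:R :> R by rewrite ler0n.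
  nra.
set s := cnt S.
have sR : (s%:R : R) = (s.-1)%:R + 1 by rewrite natr1 prednK // (ltn_trans _ hs).
have sS : forall i, i \in S :\ ord0 -> cc R m i <= b i * mu R m.
  move=> i; rewrite !inE => /andP [i0 iS].
  have E := cnt_D i0 iS.
  have := NE_drop NE iS.
  rewrite (ffmid R m S) // (ffmid R m (S :\ i)).
  - move=> h; apply: le_trans h _; apply: ler_wpM2l; first exact: b0.
    have E' : (cnt S)%:R = (cnt (S :\ i))%:R + 1 :> R by rewrite E natr1.
    rewrite E'; lra.
  - apply/set0Pn.
    have : (0 < cnt (S :\ i))%N by rewrite -ltnS -E.
    by case/card_gt0P => x; rewrite inE => /andP [_ xS]; exists x.
  - by apply/eqP => /setP /(_ i); rewrite !inE eqxx.
have : (0 < #|S :\ ord0|)%N by rewrite -/(cnt S) (ltn_trans _ hs).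
case/card_gt0P => y yS.
have hy := sS y yS.
have bnz : forall i, i \in S :\ ord0 -> b i != 0.
  move=> i iS; have := sS i iS; have := cc_gt0 R m i m1.
  by case: (b i =P 0) => [->|//]; rewrite mul0r; lra.
have bsum : b y * s%:R <= \sum_i b i.
  apply: le_trans (sum_ge_sub R m b (S :\ ord0) b0).
  rewrite (eq_bigr (fun _ => b y)); last first.
    by move=> i iS; apply: be; apply: bnz.
  by rewrite sumr_const /s /cnt mulr_natr.
move: hy; rewrite /cc; have := yS; rewrite !inE => /andP [y0 _]; rewrite (negbTE y0) => hy.
have hy' : ll R m + mu R m <= 2 * m%:R * (b y * mu R m).
  by move: hy; rewrite ler_pdivrMr; [lra|lra].
have s0 : 0 <= s%:R :> R by rewrite ler0n.
case: (lerP 1 (b y * s%:R)) => hbs.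
  have : 0 <= ll R m + mu R m * s%:R by nra.
  nra.
have h1 : ll R m * s%:R <= 2 * (mu R m * m%:R) * (b y * s%:R) by nra.
have pm : 0 < mu R m * m%:R by apply: mulr_gt0; lra.
have h2' : 2 * (mu R m * m%:R) * (b y * s%:R) <= 2 * (mu R m * m%:R).
  by rewrite -[X in _ <= X]mulr1; apply: ler_wpM2l; lra.
have h2 : ll R m * s%:R <= 2 * (ll R m * KK R m) by rewrite -mum; lra.
have h3 : s%:R <= 2 * KK R m by nra.
have h4 : mu R m * s%:R <= 2 * ll R m by rewrite -muK; nra.
nra.
Qed.
Arguments eq_bound {R m b S}.

Theorem proposition5p9 (R : realType) :
  exists C : R, 0 < C /\
  exists N : nat, forall n : nat, (N <= n)%N ->
  exists (T : finType) (own : T -> 'I_n) (c : T -> R) (f : {set T} -> R),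
    [/\ costs_nonneg c, reward_fun f, subadditive f &
    exists (a : 'I_n -> R) (S : {set T}),
      [/\ is_contract a, is_NE own c f a S,
          0 < principal_utility f a S &
          forall (b : 'I_n -> R) (S' : {set T}),
            is_contract b -> equal_pay b -> is_NE own c f b S' ->
            C * Num.sqrt (n%:R) * principal_utility f b S'
              <= principal_utility f a S]].
Proof.
exists (1 / 24); split; first lra.
exists 4%N => n; case: n => [//|m] Hn.
have m3 : (3 <= m)%N by [].
have m1 : (1 <= m)%N := leq_trans (isT : (1 <= 3)%N) m3.
case: (params R m m1) => K0 K2 l0 l1 [mum mu0 m1R Km].
exists [the finType of 'I_m.+1], (fun j => j), (cc R m), (ff R m).
split.
- by move=> j; apply: ltW; apply: cc_gt0.
- split; first exact: ff0.
    by move=> S; rewrite ff_ge0 ?ff_le1.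
  by move=> S S' h; apply: ff_mono.
- by move=> A B; apply: ff_subadd.
exists (aa R m), setT.
have PUa : principal_utility (ff R m) (aa R m) setT
   = 1 / 4 * (2 * ll R m + ll R m * KK R m).
  by rewrite /principal_utility sum_aa // ffT mum; field.
split.
- exact: aa_contract.
- exact: aa_NE.
- by rewrite PUa; apply: mulr_gt0; [lra|nra].
move=> b S' bc be NE.
have U := eq_bound m3 bc be NE.
rewrite PUa.
set Q := Num.sqrt _.
have Q0 : 0 <= Q by exact: sqrtr_ge0.
have Q2 : Q * Q = (m.+1)%:R by rewrite -expr2 sqr_sqrtr // ler0n.
have mS : (m.+1)%:R = m%:R + 1 :> R by rewrite -natr1.
have QK : Q <= 2 * KK R m by nra.
have CQ : 0 <= 1 / 24 * Q by lra.
apply: le_trans (ler_wpM2l CQ U) _.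
nra.
Qed.
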